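(* Let $d\geq 2$ and let $U=(u_{ij})\in\mathcal{U}_d(\mathbb{C})$ be such that there exists $M\in\mathbb{N}$ for which $(P_U^TP_U)^M$ has all entries non-zero. Let $\mathcal{F}_A=\mathcal{DU}_d(\mathbb{C})$ and $\mathcal{F}_B=\{U^\dagger DU: D\in\mathcal{DU}_d(\mathbb{C})\}$. Then every unitary matrix $V\in\mathcal{U}_d(\mathbb{C})$ can be written as a finite product of matrices each belonging to $\mathcal{F}_A$ or to $\mathcal{F}_B$.
   Context: $\mathcal{U}_d(\mathbb{C})$ denotes the group of $d\times d$ unitary matrices and $\mathcal{DU}_d(\mathbb{C})$ its subgroup of diagonal unitary matrices. $P_U=(p_{ij})$ is the $0/1$ matrix with $p_{ij}=0$ if $u_{ij}=0$ and $p_{ij}=1$ if $u_{ij}\neq 0$. *)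

(* Defs.v *)
From HB Require Import structures.
From mathcomp Require Import all_boot all_order all_algebra.
From mathcomp Require Import complex.
From mathcomp Require Import reals.
Set Implicit Arguments. Unset Strict Implicit. Unset Printing Implicit Defensive.
Import Order.TTheory GRing.Theory Num.Theory.
Local Open Scope ring_scope.

Definition adjmx (R : realType) (d : nat) (U : 'M[R[i]]_d) : 'M[R[i]]_d :=
  (map_mx (fun z : R[i] => z^*) U)^T.

Definition unitary (R : realType) (d : nat) (U : 'M[R[i]]_d) : Prop :=
  adjmx U *m U = 1%:M /\ U *m adjmx U = 1%:M.

Definition diag_unitary (R : realType) (d : nat) (D : 'M[R[i]]_d) : Prop :=
  is_diag_mx D /\ unitary D.

Definition pattern_mx (R : realType) (d : nat) (U : 'M[R[i]]_d) : 'M[int]_d :=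
  \matrix_(i, j) (if U i j == 0 then 0 else 1).

(* matrix power by iterated product (valid for any dimension d) *)
Definition mxpow (T : pzRingType) (d : nat) (A : 'M[T]_d) (k : nat) : 'M[T]_d :=
  iter k (fun B => A *m B) 1%:M.

Definition mxprod (T : pzRingType) (d : nat) (s : seq 'M[T]_d) : 'M[T]_d :=
  foldr (fun A B => A *m B) 1%:M s.

(* Main.v *)
Require Import Defs.
From HB Require Import structures.
From mathcomp Require Import all_boot all_order all_algebra.
From mathcomp Require Import complex.
From mathcomp Require Import reals.
From mathcomp Require Import ring lra zify.
From mathcomp Require Import sesquilinear spectral.
Import Order.TTheory GRing.Theory Num.Theory.
Local Open Scope ring_scope.
Set Implicit Arguments. Unset Strict Implicit. Unset Printing Implicit Defensive.

Section Basics.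
Variable R : realType.
Local Notation C := (R[i]).
Local Notation Rc := (@complex.Re R).
Local Notation Ic := (@complex.Im R).
Definition sq (z : C) : R := Rc z ^+ 2 + Ic z ^+ 2.
Local Notation "x %:C" := (real_complex R x).

Lemma mulCJ (z : C) : z^* * z = (sq z)%:C.
Proof. case: z => a b; rewrite /sq /=; simpc; congr Complex; ring. Qed.

Lemma sq_ge0 z : 0 <= sq z.
Proof. by rewrite /sq addr_ge0 ?sqr_ge0. Qed.

Lemma sq_eq0 z : (sq z == 0) = (z == 0).
Proof.
case: z => a b; rewrite /sq /= paddr_eq0 ?sqr_ge0 // !sqrf_eq0.
by rewrite eq_complex.
Qed.

Lemma sqM z w : sq (z * w) = sq z * sq w.
Proof. case: z => a b; case: w => c e; rewrite /sq /=; ring. Qed.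

Lemma sqJ z : sq z^* = sq z.
Proof. case: z => a b; rewrite /sq /=; ring. Qed.

Lemma sqR (r : R) : sq r%:C = r ^+ 2.
Proof. rewrite /sq /=; ring. Qed.

Lemma conjR (r : R) : (r%:C)^* = r%:C.
Proof. by apply/eqP; rewrite eq_complex /= oppr0 !eqxx. Qed.

Definition muo (m : R) : C := Complex m (@Num.sqrt R (1 - m ^+ 2)).

Lemma muo_sq m : -1 <= m <= 1 -> @Num.sqrt R (1 - m ^+ 2) ^+ 2 = 1 - m ^+ 2.
Proof. move=> /andP[h1 h2]; apply: sqr_sqrtr; nra. Qed.

Lemma muo_unit m : -1 <= m <= 1 -> muo m * (muo m)^* = 1.
Proof.
move=> hm; have := muo_sq hm; rewrite /muo /=; set s := Num.sqrt _ => hs.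
simpc; apply/eqP; rewrite eq_complex /=; apply/andP; split; apply/eqP.
  by rewrite -!expr2 hs; ring.
ring.
Qed.

Lemma scal1 (q t : R) : 0 < q < 1 -> (1 - 2 * q) ^+ 2 <= t <= 1 ->
  exists mu : C, mu * mu^* = 1 /\ sq (1 + (mu - 1) * q%:C) = t /\ (t < 1 -> mu != 1).
Proof.
move=> /andP[q0 q1] /andP[t0 t1].
have D0 : 0 < 2 * q * (1 - q) by apply: mulr_gt0; lra.
set m := (t - (1 - q) ^+ 2 - q ^+ 2) / (2 * q * (1 - q)).
have e1 : 1 - m = (1 - t) / (2 * q * (1 - q)) by rewrite /m; field; lra.
have e2 : 1 + m = (t - (1 - 2 * q) ^+ 2) / (2 * q * (1 - q)) by rewrite /m; field; lra.
have m1 : m <= 1 by rewrite -subr_ge0 e1 divr_ge0 //; lra.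
have m2 : -1 <= m by rewrite -(subr_ge0 (-1)) opprK addrC e2 divr_ge0 //; lra.
have hm : -1 <= m <= 1 by rewrite m1 m2.
exists (muo m); split; first exact: muo_unit.
split.
  have := muo_sq hm; rewrite /muo /sq; set s := Num.sqrt _ => hs.
  simpc => /=.
  rewrite exprMn hs /m; field; lra.
move=> tl; apply/eqP => /eqP; rewrite eq_complex /= => /andP[/eqP mm _].
move: e1; rewrite mm subrr => /esym/eqP; rewrite mulf_eq0 invr_eq0; lra.
Qed.


Lemma mulCJ' (z : C) : z * z^* = (sq z)%:C.
Proof. by rewrite mulrC mulCJ. Qed.





Lemma scal2 (w : C) : exists mu lam : C, mu * mu^* = 1 /\ lam * lam^* = 1 /\ mu != 1 /\ lam * (1 + mu) = (mu - 1) * w.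
Proof.
have r0 := sq_ge0 w; set r := sq w in r0.
set m := (r - 1) / (r + 1).
have e1 : 1 - m = 2 / (r + 1) by rewrite /m; field; lra.
have e2 : 1 + m = 2 * r / (r + 1) by rewrite /m; field; lra.
have m1 : m < 1 by rewrite -subr_gt0 e1 divr_gt0 //; lra.
have m2 : -1 <= m by rewrite -(subr_ge0 (-1)) opprK addrC e2 divr_ge0 //; lra.
have hm : -1 <= m <= 1 by rewrite m2 ltW.
have hs := muo_sq hm.
have mu1 : muo m != 1.
  by apply/eqP => /eqP; rewrite eq_complex /= => /andP[/eqP mm _]; move: m1; rewrite mm ltxx.
case: (eqVneq w 0) => [w0|w0].
  exists (muo m), 1; split; first exact: muo_unit.
  split; first by rewrite rmorph1 mulr1.
  split => //; rewrite w0 mulr0 mul1r.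
  have r00 : r = 0 by rewrite /r w0 /sq /= expr0n /= addr0.
  have mE : m = -1 by rewrite /m r00; field.
  rewrite /muo mE; apply/eqP; rewrite eq_complex /=.
  by rewrite expr2 mulN1r opprK subrr sqrtr0 addr0 !eqxx.
have rp : 0 < r by rewrite lt_def r0 andbT /r sq_eq0.
have mu2 : 1 + muo m != 0.
  apply/eqP => /eqP; rewrite eq_complex /= => /andP[/eqP mm _].
  have : 0 < 1 + m by rewrite e2 divr_gt0 //; lra.
  by rewrite mm ltxx.
exists (muo m), ((muo m - 1) * w / (1 + muo m)); split; first exact: muo_unit.
split; last by split => //; rewrite divfK.
rewrite !rmorphM fmorphV /=.
have -> : (muo m - 1) * w / (1 + muo m) * ((muo m - 1)^* * w^* / (1 + muo m)^*) =
   ((muo m - 1) * (muo m - 1)^*) * (w * w^*) / ((1 + muo m) * (1 + muo m)^*).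
  field; have : (1 + muo m)^* != 0 by rewrite conjC_eq0.
  by rewrite rmorphD /= conjC1 mu2 => ->.
rewrite !mulCJ' -!rmorphM -fmorphV -rmorphM.
have -> : sq (muo m - 1) = 2 - 2 * m.
  by rewrite /sq /muo /= ?subr0 ?add0r ?addr0 hs; ring.
have -> : sq (1 + muo m) = 2 + 2 * m.
  by rewrite /sq /muo /= ?subr0 ?add0r ?addr0 hs; ring.
have -> : (2 - 2 * m) * r / (2 + 2 * m) = 1 by rewrite /m; field; lra.
by [].
Qed.

Section Vec.
Variable n : nat.
Implicit Types x y z w : 'cV[C]_n.

Definition cadj m p (A : 'M[C]_(m, p)) : 'M[C]_(p, m) := (map_mx (fun z : C => z^*) A)^T.
Definition dot x y : C := \sum_i (x i 0)^* * y i 0.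
Definition nrm x : R := \sum_i sq (x i 0).

Lemma cadjE m p (A : 'M[C]_(m, p)) i j : cadj A i j = (A j i)^*.
Proof. by rewrite !mxE. Qed.

Lemma cadjK m p (A : 'M[C]_(m, p)) : cadj (cadj A) = A.
Proof. by apply/matrixP => i j; rewrite !cadjE conjCK. Qed.

Lemma cadjM m p q (A : 'M[C]_(m, p)) (B : 'M[C]_(p, q)) :
  cadj (A *m B) = cadj B *m cadj A.
Proof.
apply/matrixP => i j; rewrite !mxE rmorph_sum; apply: eq_bigr => k _.
by rewrite !mxE rmorphM mulrC.
Qed.

Lemma cadj1 : cadj (1%:M : 'M[C]_n) = 1%:M.
Proof. by apply/matrixP => i j; rewrite !mxE eq_sym rmorph_nat. Qed.

Lemma cadjD m p (A B : 'M[C]_(m, p)) : cadj (A + B) = cadj A + cadj B.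
Proof. by apply/matrixP => i j; rewrite !mxE rmorphD. Qed.

Lemma cadjZ m p c (A : 'M[C]_(m, p)) : cadj (c *: A) = c^* *: cadj A.
Proof. by apply/matrixP => i j; rewrite !mxE rmorphM. Qed.

Lemma cadj_dot x y : cadj x *m y = (dot x y)%:M.
Proof.
apply/matrixP => i j; rewrite !ord1 !mxE /= mulr1n; apply: eq_bigr => k _.
by rewrite !mxE.
Qed.

Lemma dotC x y : (dot x y)^* = dot y x.
Proof. rewrite rmorph_sum; apply: eq_bigr => k _; rewrite rmorphM /= conjCK; exact: mulrC. Qed.

Lemma dot_xx x : dot x x = (nrm x)%:C.
Proof. rewrite /dot /nrm rmorph_sum; apply: eq_bigr => k _; exact: mulCJ. Qed.

Lemma nrm_ge0 x : 0 <= nrm x.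
Proof. by apply: sumr_ge0 => i _; exact: sq_ge0. Qed.

Lemma nrm_eq0 x : (nrm x == 0) = (x == 0).
Proof.
apply/idP/idP; last first.
  by move/eqP->; rewrite /nrm big1 // => i _; rewrite mxE; apply/eqP; rewrite sq_eq0.
move/eqP/psumr_eq0P => H; apply/eqP/matrixP => i j; rewrite ord1 mxE.
by apply/eqP; rewrite -sq_eq0 H // => k _; exact: sq_ge0.
Qed.

Lemma nrm_gt0 x : x != 0 -> 0 < nrm x.
Proof. by move=> H; rewrite lt_def nrm_eq0 H nrm_ge0. Qed.

Lemma dot_xx_neq0 x : x != 0 -> dot x x != 0.
Proof. by move=> H; rewrite dot_xx -(rmorph0 (real_complex R)) (inj_eq (@complexI R)) nrm_eq0. Qed.

Lemma dotDr x y z : dot x (y + z) = dot x y + dot x z.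
Proof. by rewrite /dot -big_split; apply: eq_bigr => k _; rewrite mxE mulrDr. Qed.
Lemma dotZr x c y : dot x (c *: y) = c * dot x y.
Proof. by rewrite /dot mulr_sumr; apply: eq_bigr => k _; rewrite mxE mulrCA. Qed.
Lemma dotDl x y z : dot (x + y) z = dot x z + dot y z.
Proof. by rewrite /dot -big_split; apply: eq_bigr => k _; rewrite mxE rmorphD mulrDl. Qed.
Lemma dotZl x c y : dot (c *: x) y = c^* * dot x y.
Proof. by rewrite /dot mulr_sumr; apply: eq_bigr => k _; rewrite mxE rmorphM /= mulrA. Qed.
Lemma dotNr x y : dot x (- y) = - dot x y.
Proof. by rewrite -scaleN1r dotZr mulN1r. Qed.
Lemma dotNl x y : dot (- x) y = - dot x y.
Proof. by rewrite -scaleN1r dotZl rmorphN /= conjC1 mulN1r. Qed.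
Lemma dotBr x y z : dot x (y - z) = dot x y - dot x z.
Proof. by rewrite dotDr dotNr. Qed.
Lemma dotBl x y z : dot (x - y) z = dot x z - dot y z.
Proof. by rewrite dotDl dotNl. Qed.

Definition ev (j : 'I_n) : 'cV[C]_n := delta_mx j 0.

Lemma dot_evl j y : dot (ev j) y = y j 0.
Proof.
rewrite /dot (bigD1 j) //= big1 ?addr0; first by rewrite !mxE !eqxx conjC1 mul1r.
by move=> k /negbTE kj; rewrite !mxE kj conjC0 mul0r.
Qed.
Lemma dot_evr j y : dot y (ev j) = (y j 0)^*.
Proof. by rewrite -dotC dot_evl. Qed.

Definition Pm w (a : C) : 'M[C]_n := 1%:M + ((a - 1) / dot w w) *: (w *m cadj w).

Lemma Pm_vec w a v : Pm w a *m v = v + ((a - 1) / dot w w * dot w v) *: w.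
Proof.
by rewrite /Pm mulmxDl mul1mx -scalemxAl -mulmxA cadj_dot mul_mx_scalar scalerA.
Qed.

Lemma cadj_Pm w a : cadj (Pm w a) = Pm w a^*.
Proof.
rewrite /Pm cadjD cadj1 cadjZ cadjM cadjK rmorphM rmorphB /= conjC1 fmorphV /=.
by rewrite dot_xx conjR.
Qed.

Lemma Pm_comp w a b : w != 0 -> Pm w a *m Pm w b = Pm w (a * b).
Proof.
move=> w0; have N0 := dot_xx_neq0 w0.
have PP : (w *m cadj w) *m (w *m cadj w) = dot w w *: (w *m cadj w).
  by rewrite mulmxA -[w *m _ *m w]mulmxA cadj_dot mul_mx_scalar -scalemxAl.
rewrite /Pm mulmxDl mul1mx mulmxDr mulmx1 -scalemxAl -scalemxAr PP !scalerA.
rewrite -!addrA; congr (_ + _); rewrite -!scalerDl; congr (_ *: _).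
by field.
Qed.

Lemma Pm1 w : Pm w 1 = 1%:M.
Proof. by rewrite /Pm subrr mul0r scale0r addr0. Qed.

Lemma Pm_scale w c a : c != 0 -> Pm (c *: w) a = Pm w a.
Proof.
move=> c0; case: (eqVneq w 0) => [->|w0]; first by rewrite scaler0.
have N0 := dot_xx_neq0 w0.
rewrite /Pm dotZl dotZr cadjZ -scalemxAl -scalemxAr !scalerA.
congr (_ + _ *: _); field; rewrite N0 c0 /= conjC_eq0 c0 //.
Qed.

Lemma Pm_conj g w a : cadj g *m g = 1%:M -> g *m cadj g = 1%:M ->
  g *m Pm w a *m cadj g = Pm (g *m w) a.
Proof.
move=> h1 h2; rewrite /Pm mulmxDr mulmx1 mulmxDl h2 -scalemxAr -scalemxAl.
have -> : dot (g *m w) (g *m w) = dot w w.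
  have := cadj_dot (g *m w) (g *m w); rewrite cadjM mulmxA -[cadj w *m _ *m _]mulmxA h1 mulmx1 cadj_dot.
  by move/matrixP/(_ 0 0); rewrite !mxE !eqxx !mulr1n => ->.
by rewrite cadjM !mulmxA.
Qed.

End Vec.
End Basics.

Section Grp.
Variable R : realType.
Local Notation C := (R[i]).
Local Notation "x %:C" := (real_complex R x).
Variable d : nat.
Variable U : 'M[C]_d.
Hypothesis HU : unitary U.
Implicit Types x y z w v : 'cV[C]_d.
Local Notation ev := (@ev R d).

Lemma adjmxE (A : 'M[C]_d) : adjmx A = cadj A.
Proof. by []. Qed.

Definition gen (A : 'M[C]_d) : Prop :=
  diag_unitary A \/ exists D : 'M[C]_d, diag_unitary D /\ A = adjmx U *m D *m U.

Definition inG (A : 'M[C]_d) : Prop :=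
  exists s : seq 'M[C]_d, (forall B, B \in s -> gen B) /\ A = mxprod s.

Lemma mxprod_cat (s1 s2 : seq 'M[C]_d) : mxprod (s1 ++ s2) = mxprod s1 *m mxprod s2.
Proof. elim: s1 => [|A s IH] /=; first by rewrite mul1mx. by rewrite IH mulmxA. Qed.

Lemma inG_mul A B : inG A -> inG B -> inG (A *m B).
Proof.
move=> [s1 [h1 ->]] [s2 [h2 ->]]; exists (s1 ++ s2); split; last by rewrite mxprod_cat.
by move=> M; rewrite mem_cat => /orP[/h1|/h2].
Qed.

Lemma inG_gen A : gen A -> inG A.
Proof.
move=> h; exists [:: A]; split; last by rewrite /= mulmx1.
by move=> B; rewrite inE => /eqP ->.
Qed.

Lemma Pm_unitary w a : w != 0 -> a * a^* = 1 -> unitary (Pm w a).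
Proof.
move=> w0 a1; rewrite /unitary !adjmxE cadj_Pm !Pm_comp //.
by rewrite mulrC a1 Pm1.
Qed.

Lemma dot_unitary (A : 'M[C]_d) x y : cadj A *m A = 1%:M ->
  dot (A *m x) (A *m y) = dot x y.
Proof.
move=> h; have := cadj_dot (A *m x) (A *m y).
rewrite cadjM mulmxA -[cadj x *m _ *m _]mulmxA h mulmx1 cadj_dot.
by move/matrixP/(_ 0 0); rewrite !mxE !eqxx !mulr1n.
Qed.

Definition W w : Prop := w != 0 /\ forall a : C, a * a^* = 1 -> inG (Pm w a).

Lemma W_neq0 w : W w -> w != 0. Proof. by case. Qed.

Lemma W_closed y w mu : W y -> W w -> mu * mu^* = 1 -> W (Pm y mu *m w).
Proof.
move=> [y0 hy] [w0 hw] mu1; have [h1 h2] := Pm_unitary y0 mu1.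
rewrite adjmxE in h1 h2.
split.
  apply: contra w0 => /eqP e; apply/eqP.
  by rewrite -[w]mul1mx -h1 -mulmxA e mulmx0.
move=> a a1; rewrite -Pm_conj // cadj_Pm.
apply: inG_mul; first by apply: inG_mul; [exact: hy|exact: hw].
by apply: hy; rewrite conjCK mulrC.
Qed.

Lemma W_scale w c : W w -> c != 0 -> W (c *: w).
Proof.
move=> [w0 hw] c0; split; first by rewrite scaler_eq0 negb_or c0.
by move=> a a1; rewrite Pm_scale //; apply: hw.
Qed.

Lemma ev_neq0 (j : 'I_d) : ev j != 0.
Proof.
apply/eqP => /matrixP/(_ j 0); rewrite !mxE !eqxx /= => /eqP; by rewrite oner_eq0.
Qed.

Lemma W_ev (j : 'I_d) : W (ev j).
Proof.
split; first exact: ev_neq0.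
move=> a a1; apply: inG_gen; left; split; last exact: Pm_unitary (ev_neq0 j) a1.
apply/is_diag_mxP => i k ik.
have {}ik : i != k by []. rewrite /Pm !mxE big_ord1 !mxE (negbTE ik) add0r !eqxx !andbT.
case: eqP => [eij|_]; last by rewrite mul0r mulr0.
case: eqP => [ekj|_]; last by rewrite rmorph0 !mulr0.
by move: ik; rewrite eij ekj eqxx.
Qed.

Lemma W_row (k : 'I_d) : W (cadj U *m ev k).
Proof.
have [h1 h2] := HU; rewrite adjmxE in h1 h2.
split.
  apply: contra (ev_neq0 k) => /eqP e; apply/eqP.
  by rewrite -[ev k]mul1mx -h2 -mulmxA e mulmx0.
move=> a a1; rewrite -Pm_conj ?cadjK //; last first.
apply: inG_gen; right; exists (Pm (ev k) a); split => //.
split; last exact: Pm_unitary (ev_neq0 k) a1.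
apply/is_diag_mxP => i l il.
have {}il : i != l by []. rewrite /Pm !mxE big_ord1 !mxE (negbTE il) add0r !eqxx !andbT.
case: eqP => [eij|_]; last by rewrite mul0r mulr0.
case: eqP => [ekj|_]; last by rewrite rmorph0 !mulr0.
by move: il; rewrite eij ekj eqxx.
Qed.

Definition qf x y : R := sq (dot x y) / (nrm x * nrm y).

Lemma realC_neq0 (r : R) : r != 0 -> r%:C != 0.
Proof. by move=> r0; rewrite -(rmorph0 (real_complex R)) (inj_eq (@complexI R)). Qed.

Lemma CS_strict x y : x != 0 -> (forall c, y != c *: x) ->
  sq (dot x y) < nrm x * nrm y.
Proof.
move=> x0 hy; have X0 := nrm_gt0 x0.
have Xc0 : (nrm x)%:C != 0 by rewrite realC_neq0 // lt0r_neq0.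
set g := dot x y.
set z := y - (g / (nrm x)%:C) *: x.
have z0 : z != 0.
  apply/eqP => /eqP; rewrite subr_eq0 => /eqP e.
  by move: (hy (g / (nrm x)%:C)); rewrite e eqxx.
have e : dot z z = (nrm y - sq g / nrm x)%:C.
  rewrite /z dotBl !dotBr !dotZl !dotZr !dot_xx -(dotC x y) -/g.
  rewrite rmorphM fmorphV /= conjR rmorphB rmorphM fmorphV /= -mulCJ.
  by field.
have := nrm_gt0 z0; rewrite dot_xx in e; move/complexI: e => ->.
by rewrite subr_gt0 ltr_pdivrMr // mulrC.
Qed.

Lemma step1 x y (t : R) : W x -> W y -> 0 < qf x y < 1 ->
  (1 - 2 * qf x y) ^+ 2 <= t <= 1 ->
  exists y', W y' /\ qf x y' = t /\
    (t < 1 -> exists c, c != 0 /\ y' = x + c *: y).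
Proof.
move=> Wx Wy hq ht; have [mu [mu1 [hsq hne]]] := scal1 hq ht.
have x0 := W_neq0 Wx; have y0 := W_neq0 Wy.
have X0 := nrm_gt0 x0; have Y0 := nrm_gt0 y0.
have Xc0 : (nrm x)%:C != 0 by rewrite realC_neq0 // lt0r_neq0.
have Yc0 : (nrm y)%:C != 0 by rewrite realC_neq0 // lt0r_neq0.
set y' := Pm y mu *m x.
exists y'; split; first exact: W_closed.
have [h1 _] := Pm_unitary y0 mu1; rewrite adjmxE in h1.
have Ny : nrm y' = nrm x.
  by apply: (@complexI R); rewrite -!dot_xx dot_unitary.
have Ex : dot x y' = (nrm x)%:C * (1 + (mu - 1) * (qf x y)%:C).
  rewrite /y' Pm_vec dotDr dotZr !dot_xx -(dotC x y) /qf.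
  rewrite rmorphM fmorphV rmorphM /= -mulCJ.
  by field; rewrite Xc0 Yc0.
split.
  rewrite /qf Ny Ex sqM sqR hsq; field; exact: lt0r_neq0.
move=> tl; exists ((mu - 1) / dot y y * dot y x); split; last by rewrite /y' Pm_vec.
rewrite !mulf_neq0 //.
- by rewrite subr_eq0; exact: hne.
- by rewrite invr_eq0 dot_xx.
- rewrite -dotC conjC_eq0; apply/eqP => g0.
  by move: hq; rewrite /qf g0 /sq /= expr0n /= add0r mul0r ltxx.
Qed.

Lemma half_step x y : W x -> W y -> 0 < qf x y < 1 ->
  1/2 <= 4 * qf x y * (1 - qf x y) ->
  exists y', W y' /\ qf x y' = 1/2 /\ exists a b, b != 0 /\ y' = a *: x + b *: y.
Proof.
move=> Wx Wy hq hp.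
have ht : (1 - 2 * qf x y) ^+ 2 <= 1/2 <= (1 : R).
  have e : (1 - 2 * qf x y) ^+ 2 = 1 - 4 * qf x y * (1 - qf x y) by ring.
  rewrite e; apply/andP; split; lra.
have [y' [Wy' [qy' hc]]] := step1 Wx Wy hq ht.
exists y'; split => //; split => //.
have [|c [c0 ->]] := hc; first lra.
by exists 1, c; rewrite scale1r.
Qed.

Lemma reach_half k : forall x y, W x -> W y -> 0 < qf x y < 1 ->
  1/2 <= 2 ^+ k * (4 * qf x y * (1 - qf x y)) ->
  exists y', W y' /\ qf x y' = 1/2 /\ exists a b, b != 0 /\ y' = a *: x + b *: y.
Proof.
elim: k => [|k IH] x y Wx Wy hq hk.
  by move: hk; rewrite expr0 => hk; apply: half_step => //; lra.
case: (lerP (1/2) (4 * qf x y * (1 - qf x y))) => hp; first exact: half_step.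
set q := qf x y in hq hk hp.
have q01 : 0 < q < 1 := hq.
have [hq0 hq1] := andP q01.
have ht : (1 - 2 * qf x y) ^+ 2 <= (1 - 2 * q) ^+ 2 <= 1.
  by rewrite lexx /=; nra.
have [y1 [Wy1 [qy1 hc]]] := step1 Wx Wy hq ht.
have p0 : 0 < 4 * q * (1 - q) by nra.
have [|c [c0 ey1]] := hc; first nra.
have e : (1 - 2 * q) ^+ 2 = 1 - 4 * q * (1 - q) by ring.
have [||y' [Wy' [qy' [a [b [b0 ey']]]]]] := IH x y1 Wx Wy1.
- by rewrite qy1 e; apply/andP; split; lra.
- rewrite qy1 e; set p := 4 * q * (1 - q) in hp p0 hk *.
  have K0 : 0 <= (2:R) ^+ k by rewrite exprn_ge0.
  rewrite exprS in hk; set K := (2:R) ^+ k in K0 hk *.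
  have : 0 <= K * p * (1 - 2 * p) by apply: mulr_ge0; [apply: mulr_ge0 => //; exact: ltW | lra].
  nra.
exists y'; split => //; split => //; exists (a + b), (b * c); split.
  by rewrite mulf_neq0.
by rewrite ey' ey1 scalerDr scalerA scalerDl addrA.
Qed.

Lemma half_full x y : W x -> W y -> qf x y = 1/2 ->
  forall a b, a *: x + b *: y != 0 -> W (a *: x + b *: y).
Proof.
move=> Wx Wy hq a b hab.
have x0 := W_neq0 Wx; have y0 := W_neq0 Wy.
have X0 := nrm_gt0 x0; have Y0 := nrm_gt0 y0.
have Xc0 : (nrm x)%:C != 0 by rewrite realC_neq0 // lt0r_neq0.
have Yc0 : (nrm y)%:C != 0 by rewrite realC_neq0 // lt0r_neq0.
case: (eqVneq b 0) => [b0|b0].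
  move: hab; rewrite b0 scale0r addr0 => hab; apply: W_scale => //.
  by apply: contra hab => /eqP ->; rewrite scale0r.
set g := dot x y.
have hsq : sq g = nrm x * nrm y / 2.
  have XY0 : nrm x * nrm y != 0 by rewrite mulf_neq0 // lt0r_neq0.
  move: hq; rewrite /qf -/g => /(congr1 (fun r => r * (nrm x * nrm y))).
  by rewrite divfK // => ->; field.
have hg : g^* * g = (nrm x)%:C * (nrm y)%:C / 2.
  by rewrite mulCJ hsq rmorphM rmorphM fmorphV /= rmorph_nat.
have g0 : g != 0.
  apply/eqP => g0; move: hsq; rewrite g0 /sq /= expr0n /= add0r => /esym/eqP.
  by rewrite mulf_eq0 invr_eq0 mulf_eq0 !gt_eqF //= pnatr_eq0.
set w := 1 + 2 * g^* * a / ((nrm y)%:C * b).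
have [mu [lam [mu1 [lam1 [mune hl]]]]] := scal2 w.
set c := (mu - 1) / dot y y * dot y x.
have c0 : c != 0.
  rewrite !mulf_neq0 //.
  - by rewrite subr_eq0.
  - by rewrite invr_eq0 dot_xx.
  - by rewrite -dotC conjC_eq0.
set v2 := Pm x lam *m (Pm y mu *m x).
have Wv2 : W v2 by apply: W_closed => //; exact: W_closed.
have ev2 : v2 = (c * a / b) *: x + c *: y.
  rewrite /v2 Pm_vec Pm_vec dotDr dotZr addrAC -{1}[x]scale1r -scalerDl.
  congr (_ *: _ + _).
  rewrite /c !dot_xx -(dotC x y) -/g.
  have -> : (mu - 1) / (nrm y)%:C * g^* * g = (mu - 1) / (nrm y)%:C * (g^* * g) by rewrite mulrA.
  rewrite hg; apply/eqP; rewrite -subr_eq0.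
  have -> : 1 + (lam - 1) / (nrm x)%:C * ((nrm x)%:C + (mu - 1) / (nrm y)%:C *
      ((nrm x)%:C * (nrm y)%:C / 2)) - (mu - 1) / (nrm y)%:C * g^* * a / b =
      (lam * (1 + mu) - (mu - 1) * w) / 2.
    by rewrite /w; field; rewrite b0 /=; apply/andP; split.
  by rewrite hl subrr mul0r.
have -> : a *: x + b *: y = (b / c) *: v2.
  rewrite ev2 scalerDr !scalerA; congr (_ *: _ + _ *: _).
    by field; rewrite c0 b0.
  by field.
apply: W_scale => //; exact: mulf_neq0 _ (invr_neq0 c0).
Qed.

Lemma core x y : W x -> W y -> dot x y != 0 -> (forall c, y != c *: x) ->
  forall a b, a *: x + b *: y != 0 -> W (a *: x + b *: y).
Proof.
move=> Wx Wy g0 hy a b hab.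
have x0 := W_neq0 Wx; have y0 := W_neq0 Wy.
have X0 := nrm_gt0 x0; have Y0 := nrm_gt0 y0.
have XY0 : 0 < nrm x * nrm y by rewrite mulr_gt0.
have hq : 0 < qf x y < 1.
  apply/andP; split.
    rewrite /qf divr_gt0 // lt_def sq_eq0 g0; exact: sq_ge0.
  by rewrite /qf ltr_pdivrMr // mul1r; exact: CS_strict.
have [q0 q1] := andP hq.
have p0 : 0 < 4 * qf x y * (1 - qf x y).
  by apply: mulr_gt0; [apply: mulr_gt0 => // | rewrite subr_gt0].
have [k hk] : exists k, 1/2 <= 2 ^+ k * (4 * qf x y * (1 - qf x y)).
  move: p0; move: (4 * qf x y * (1 - qf x y)) => p p0.
  exists (Num.bound (1 / p)).
  have := upper_nthrootP (leqnn (Num.bound (1 / p))).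
  rewrite ltr_pdivrMr // => h; apply: (le_trans _ (ltW h)); lra.
have [y' [Wy' [qy' [al [be [be0 ey']]]]]] := @reach_half k x y Wx Wy hq hk.
have e1 : a - b * al / be + b / be * al = a by field.
have e2 : b / be * be = b by field.
have E : (a - b * al / be) *: x + (b / be) *: y' = a *: x + b *: y.
  by rewrite ey' scalerDr !scalerA addrA -scalerDl e1 e2.
rewrite -E; apply: half_full => //; by rewrite E.
Qed.

Lemma evE (j i : 'I_d) : ev j i 0 = (i == j)%:R.
Proof. by rewrite mxE eqxx andbT. Qed.

Lemma entryD x y i : (x + y) i 0 = x i 0 + y i 0. Proof. by rewrite mxE. Qed.
Lemma entryB x y i : (x - y) i 0 = x i 0 - y i 0. Proof. by rewrite !mxE. Qed.
Lemma entryZ a x i : (a *: x) i 0 = a * x i 0. Proof. by rewrite mxE. Qed.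

Lemma kill v i : W v -> v i 0 != 0 -> v - v i 0 *: ev i != 0 ->
  W (v - v i 0 *: ev i).
Proof.
move=> Wv vi h.
have E : v - v i 0 *: ev i = (- v i 0) *: ev i + 1 *: v.
  by rewrite scale1r scaleNr addrC.
rewrite E; apply: core => //; [exact: W_ev | by rewrite dot_evl | | by rewrite -E].
move=> c; apply/eqP => e; move: h; rewrite e entryZ evE eqxx mulr1 subrr.
by rewrite eqxx.
Qed.

Definition restr v (T : {set 'I_d}) : 'cV[C]_d :=
  \matrix_(i, k) (if i \in T then v i k else 0).

Lemma W_restr w j : W w -> w j 0 != 0 -> forall n T, #|~: T| = n -> j \in T ->
  W (restr w T).
Proof.
move=> Ww wj; elim=> [|n IH] T hT jT.
  have -> : T = setT by move/cards0_eq: hT => /(congr1 (@setC _)); rewrite setCK setC0.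
  have -> : restr w setT = w by apply/matrixP => a b; rewrite mxE in_setT.
  exact: Ww.
have [i iT] : exists i, i \in ~: T by apply/card_gt0P; rewrite hT.
rewrite inE in iT.
have hT' : #|~: (i |: T)| = n.
  have c1 := cardsC T; have c2 := cardsC (i |: T); have c3 := cardsU1 i T.
  rewrite iT /= in c3; rewrite c3 hT in c2 c1; move: c1 c2; move: #|~: (i |: T)| #|T| => a b; lia.
have jT' : j \in i |: T by rewrite setU1r.
have Wr := IH _ hT' jT'.
have ij : i != j by apply: contraNneq iT => ->.
case: (eqVneq (w i 0) 0) => wi0.
  have -> : restr w T = restr w (i |: T).
    apply/matrixP => a b; rewrite !mxE !inE ord1.
    by case: (eqVneq a i) => [->|] /=; rewrite ?(negbTE iT) ?wi0.
  exact: Wr.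
have -> : restr w T = restr w (i |: T) - (restr w (i |: T)) i 0 *: ev i.
  apply/matrixP => a b; rewrite !mxE !inE ord1 ?eqxx ?andbT /=.
  case: (eqVneq a i) => [->|ai]; first by rewrite ?eqxx (negbTE iT) /= ?mulr1 ?subrr.
  by rewrite ?(negbTE ai) /= ?mulr0 ?subr0.
apply: kill => //; first by rewrite mxE setU11.
apply/eqP => /matrixP/(_ j 0); rewrite !mxE !inE jT orbT eqxx andbT.
by rewrite eq_sym (negbTE ij) mulr0 subr0 => /eqP; rewrite (negbTE wj).
Qed.

Definition Edge (j l : 'I_d) : Prop :=
  forall z, z != 0 -> (forall i, i != j -> i != l -> z i 0 = 0) -> W z.

Lemma row_entry k i : (cadj U *m ev k) i 0 = (U k i)^*.
Proof.
rewrite mxE (bigD1 k) //= big1 ?addr0; first by rewrite evE eqxx mulr1 cadjE.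
by move=> m /negbTE mk; rewrite evE mk mulr0.
Qed.

Lemma edge_of_row k j l : j != l -> U k j != 0 -> U k l != 0 -> Edge j l.
Proof.
move=> jl ukj ukl.
set w := cadj U *m ev k.
have Ww : W w := W_row k.
have wj : w j 0 != 0 by rewrite row_entry conjC_eq0.
set T := [set j; l].
have Wv : W (restr w T) by apply: (W_restr Ww wj (erefl _)); rewrite !inE eqxx.
set v := restr w T in Wv.
have vj : v j 0 = w j 0 by rewrite mxE !inE eqxx.
have vl : v l 0 = w l 0 by rewrite mxE !inE eqxx orbT.
have vl0 : v l 0 != 0 by rewrite vl row_entry conjC_eq0.
move=> z z0 hz.
set b := z l 0 / v l 0; set a := z j 0 - b * v j 0.
have E : z = a *: ev j + b *: v.
  apply/matrixP => i c; rewrite ord1 entryD !entryZ evE.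
  case: (eqVneq i j) => [->|ij].
    by rewrite mulr1 /a subrK.
  rewrite mulr0 add0r; case: (eqVneq i l) => [->|il].
    by rewrite /b divfK.
  have vi : v i 0 = 0 by rewrite mxE !inE (negbTE ij) (negbTE il).
  by rewrite hz // vi mulr0.
rewrite E; apply: core => //; [exact: W_ev | by rewrite dot_evl vj | | by rewrite -E].
move=> c; apply/eqP => e; move: vl0; rewrite e entryZ evE.
have lj : (l == j) = false by rewrite eq_sym; exact: negbTE jl.
by rewrite lj mulr0 eqxx.
Qed.

Definition Full (S : {set 'I_d}) : Prop :=
  forall z, z != 0 -> (forall i, i \notin S -> z i 0 = 0) -> W z.

Lemma full1 j : Full [set j].
Proof.
move=> z z0 hz.
have E : z = z j 0 *: ev j.
  apply/matrixP => i c; rewrite ord1 entryZ evE.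
  case: (eqVneq i j) => [->|ij]; first by rewrite mulr1.
  by rewrite mulr0 hz // inE.
have zj : z j 0 != 0 by apply: contra z0; rewrite {2}E => /eqP ->; rewrite scale0r.
by rewrite E; apply: W_scale => //; exact: W_ev.
Qed.

Lemma conjMr (a b : C) : a^* * b^* = (a * b)^*.
Proof. by rewrite rmorphM. Qed.

Lemma phase (rho : C) : exists ph : C, ph^* * ph = 1 /\ exists r : R, ph^* * rho = r%:C.
Proof.
case: (eqVneq rho 0) => [->|r0].
  by exists 1; split; [rewrite rmorph1 mulr1 | exists 0; rewrite mulr0].
have sp : 0 < sq rho by rewrite lt_def sq_eq0 r0 sq_ge0.
set s := Num.sqrt (sq rho).
have s0 : 0 < s by rewrite sqrtr_gt0.
have ss : s ^+ 2 = sq rho by rewrite sqr_sqrtr // ltW.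
have sc0 : s%:C != 0 by rewrite realC_neq0 // lt0r_neq0.
exists (rho / s%:C); split.
  rewrite rmorphM fmorphV /= conjR.
  have -> : rho^* / s%:C * (rho / s%:C) = (rho^* * rho) / (s%:C * s%:C) by field.
  by rewrite mulCJ -rmorphM -expr2 ss divff // realC_neq0 // lt0r_neq0.
exists (sq rho / s); rewrite rmorphM fmorphV /= conjR.
rewrite rmorphM fmorphV /= -mulCJ; field; exact: sc0.
Qed.

Lemma householder u y : dot u u = dot y y -> dot y u = dot u y -> u != y ->
  Pm (u - y) (-1) *m u = y.
Proof.
move=> e1 e2 uy; set h := u - y.
have h0 : h != 0 by rewrite subr_eq0.
have Dh : dot h h = 2 * (dot u u - dot y u).
  by rewrite /h dotBl !dotBr -e1 e2; ring.
have hu : dot h u = dot u u - dot y u by rewrite /h dotBl.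
have D0 : dot u u - dot y u != 0.
  by apply: contra (dot_xx_neq0 h0); rewrite Dh => /eqP ->; rewrite mulr0.
rewrite Pm_vec hu Dh.
have -> : (-1 - 1) / (2 * (dot u u - dot y u)) * (dot u u - dot y u) = -1.
  by field.
by rewrite scaleN1r /h opprB addrC subrK.
Qed.

Lemma Pm_fix (h e : 'cV[C]_d) (a : C) : dot h e = 0 -> Pm h a *m e = e.
Proof. by move=> he; rewrite Pm_vec he mulr0 scale0r addr0. Qed.

Lemma full_ext S j l : Full S -> j \in S -> l \notin S -> Edge j l -> Full (l |: S).
Proof.
move=> FS jS lS El z z0 hz.
have jl : j != l by apply: contraNneq lS => <-.
set zl := z l 0.
set u := z - zl *: ev l.
have hu : forall i, i \notin S -> u i 0 = 0.
  move=> i iS; rewrite entryB entryZ evE.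
  case: (eqVneq i l) => [->|il]; first by rewrite mulr1 subrr.
  by rewrite mulr0 subr0 hz // !inE (negbTE il) (negbTE iS).
have ez : z = u + zl *: ev l by rewrite subrK.
case: (boolP [forall i, (i != j) ==> (u i 0 == 0)]) => [/forallP hj|/forallPn [i0]].
  apply: El => // i ij il; rewrite ez entryD entryZ evE (negbTE il) mulr0 addr0.
  by have := hj i; rewrite ij /= => /eqP.
rewrite negb_imply => /andP[i0j ui0].
have u0 : u != 0 by apply: contraNneq ui0 => ->; rewrite mxE.
have [ph [ph1 [r hr]]] := phase (u j 0).
have N0 := nrm_gt0 u0.
set n := Num.sqrt (nrm u).
have n0 : 0 < n by rewrite sqrtr_gt0.
have nn : n ^+ 2 = nrm u by rewrite sqr_sqrtr // ltW.
set y := (n%:C * ph) *: ev j.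
have e1 : dot u u = dot y y.
  rewrite /y dotZl dotZr dot_evl evE eqxx mulr1 rmorphM /= conjR dot_xx -nn.
  have -> : n%:C * ph^* * (n%:C * ph) = n%:C * n%:C * (ph^* * ph) by ring.
  by rewrite ph1 mulr1 -rmorphM expr2.
have e2' : dot y u = (n * r)%:C.
  by rewrite /y dotZl rmorphM /= conjR dot_evl -mulrA hr rmorphM.
have e2 : dot y u = dot u y by rewrite -(dotC y u) e2' conjR.
have uy : u != y.
  apply: contra ui0 => /eqP ->; rewrite /y entryZ evE (negbTE i0j) mulr0.
  by [].
set h := u - y.
have h0 : h != 0 by rewrite subr_eq0.
have Wh : W h.
  apply: FS => // i iS; rewrite entryB hu // entryZ evE.
  have -> : (i == j) = false by apply: contraNF iS => /eqP ->.
  by rewrite mulr0 subr0.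
have Hu := householder e1 e2 uy.
have Hl : Pm h (-1) *m ev l = ev l.
  apply: Pm_fix; rewrite dot_evr entryB hu // entryZ evE.
  by rewrite eq_sym (negbTE jl) mulr0 subr0 rmorph0.
have Hz : Pm h (-1) *m z = y + zl *: ev l.
  by rewrite ez mulmxDr -scalemxAr Hu Hl.
have WHz : W (Pm h (-1) *m z).
  rewrite Hz; apply: El.
    have lj : (j == l) = false := negbTE jl.
    apply/eqP => /matrixP/(_ j 0); rewrite entryD !entryZ !evE eqxx lj mulr0 addr0 mulr1 mxE.
    move=> /eqP; rewrite mulf_eq0 => /orP[|/eqP ph0].
      by apply/negP; exact: realC_neq0 (lt0r_neq0 n0).
    by move: ph1; rewrite ph0 mulr0 => /eqP; rewrite eq_sym oner_eq0.
  move=> i ij il; rewrite entryD !entryZ !evE (negbTE ij) (negbTE il) !mulr0 addr0.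
  by [].
have unit1 : (-1 : C) * (-1)^* = 1 by rewrite rmorphN rmorph1 mulrNN mulr1.
have := W_closed Wh WHz unit1.
by rewrite mulmxA Pm_comp // mulrNN mulr1 Pm1 mul1mx.
Qed.

End Grp.

Lemma connect_step (R : realType) d (U : 'M[R[i]]_d) (S : {set 'I_d}) i0 :
  (exists M : nat, forall i j,
      mxpow ((pattern_mx U)^T *m pattern_mx U) M i j != 0) ->
  i0 \in S -> S != setT ->
  exists j l k, [/\ j \in S, l \notin S, U k j != 0 & U k l != 0].
Proof.
move=> [M hM] i0S ST.
have [l lS] : exists l, l \notin S.
  case: (boolP [exists l, l \notin S]) => [/existsP//|/existsPn H].
  case/negP: ST; apply/eqP/setP => x; rewrite in_setT; have := H x; by rewrite negbK.
case: (boolP [exists j, exists l, exists k,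
   [&& j \in S, l \notin S, U k j != 0 & U k l != 0]]).
  move/existsP => [j /existsP [l' /existsP [k /and4P [a b c e]]]].
  by exists j, l', k.
move=> /existsPn H; exfalso.
set A := (pattern_mx U)^T *m pattern_mx U in hM.
have hA : forall j i, j \in S -> i \notin S -> A j i = 0.
  move=> j i jS iS; rewrite !mxE big1 // => k _; rewrite !mxE.
  have := H j; move/existsPn/(_ i)/existsPn/(_ k).
  rewrite jS iS /= negb_and !negbK => /orP [/eqP->|/eqP->]; rewrite eqxx ?mul0r ?mulr0 //.
have claim : forall m j, j \in S -> mxpow A m j l = 0.
  elim=> [|m IH] j jS.
    rewrite /mxpow /= mxE.
    have -> : (j == l) = false by apply: contraNF lS => /eqP <-.
    by [].
  rewrite /mxpow /= -/(mxpow A m) mxE big1 // => i _.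
  case: (boolP (i \in S)) => iS; first by rewrite IH // mulr0.
  by rewrite hA // mul0r.
by have := hM i0 l; rewrite claim // eqxx.
Qed.

Section Final.
Variable R : realType.
Local Notation C := (R[i]).
Variable d : nat.
Variable U : 'M[C]_d.
Hypothesis HU : unitary U.
Local Notation W := (@W R d U).
Local Notation Full := (@Full R d U).
Local Notation ev := (@ev R d).
Local Notation inG := (@inG R d U).

Lemma grow (i0 : 'I_d) :
  (exists M : nat, forall i j,
      mxpow ((pattern_mx U)^T *m pattern_mx U) M i j != 0) ->
  forall m, exists S : {set 'I_d}, [/\ i0 \in S, Full S & (minn m d <= #|S|)%N].
Proof.
move=> hM; elim=> [|m [S [i0S FS hc]]].
  by exists [set i0]; split; [rewrite inE | exact: full1 | rewrite min0n].
case: (leqP (minn m.+1 d) #|S|) => h; first by exists S.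
have ST : S != setT.
  apply/eqP => ST; move: h; rewrite ST cardsT card_ord; lia.
have [j [l [k [jS lS ukj ukl]]]] := connect_step hM i0S ST.
have jl : j != l by apply: contraNneq lS => <-.
have El := edge_of_row HU jl ukj ukl.
exists (l |: S); split; [by rewrite setU1r | exact: full_ext FS jS lS El |].
move: h hc; rewrite cardsU1 lS /=; move: #|S| => c; lia.
Qed.

Lemma all_W (i0 : 'I_d) :
  (exists M : nat, forall i j,
      mxpow ((pattern_mx U)^T *m pattern_mx U) M i j != 0) ->
  forall z, z != 0 -> W z.
Proof.
move=> hM z z0; have [S [_ FS hc]] := grow i0 hM d.
have ST : S = setT.
  by apply/eqP; rewrite eqEcard subsetT cardsT card_ord /=; move: hc; rewrite minnn.
by rewrite ST in FS; apply: FS => // i; rewrite in_setT.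
Qed.

Lemma Pm_ev_diag (k : 'I_d) (a : C) :
  Pm (ev k) a = diag_mx (\row_i (if i == k then a else 1)).
Proof.
apply/matrixP => i j; rewrite /Pm dot_evl evE eqxx divr1 !mxE big_ord1 !mxE !eqxx !andbT.
case: (eqVneq i j) => [->|ij].
  case: (j == k) => /=.
    by rewrite conjC1 !mul1r mulr1n; ring.
  by rewrite mul0r mulr0 addr0.
rewrite add0r mulr0n.
case: (eqVneq i k) => [ik|]; last by rewrite mul0r mulr0.
have -> : (j == k) = false by rewrite -ik eq_sym; exact: negbTE ij.
by rewrite rmorph0 !mulr0.
Qed.

Lemma diag_prod (f : 'I_d -> C) (s : seq 'I_d) : uniq s ->
  mxprod [seq Pm (ev k) (f k) | k <- s] = diag_mx (\row_i (if i \in s then f i else 1)).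
Proof.
elim: s => [|k s IH] /=.
  by move=> _; apply/matrixP => i j; rewrite !mxE.
move=> /andP[ks us]; rewrite IH // Pm_ev_diag mulmx_diag; congr diag_mx.
apply/rowP => j; rewrite !mxE inE.
case: (eqVneq j k) => [->|jk] /=; first by rewrite (negbTE ks) mulr1.
by rewrite mul1r.
Qed.

Lemma inG_mxprod (s : seq 'M[C]_d) : (forall A, A \in s -> inG A) -> inG (mxprod s).
Proof.
elim: s => [|A s IH] h /=.
  by exists [::]; split.
apply: inG_mul; first by apply: h; rewrite mem_head.
by apply: IH => B Bs; apply: h; rewrite inE Bs orbT.
Qed.

Lemma conj_prod (P : 'M[C]_d) (s : seq 'M[C]_d) :
  cadj P *m P = 1%:M -> P *m cadj P = 1%:M ->
  cadj P *m mxprod s *m P = mxprod [seq cadj P *m A *m P | A <- s].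
Proof.
move=> h1 h2; elim: s => [|A s IH] /=; first by rewrite mulmx1.
rewrite -IH !mulmxA; congr (_ *m _).
by rewrite -[cadj P *m A *m P *m cadj P]mulmxA h2 mulmx1.
Qed.

End Final.

Unset Implicit Arguments.

Theorem theorem10 (R : realType) (d : nat) (U : 'M[R[i]]_d) :
  (2 <= d)%N ->
  unitary U ->
  (exists M : nat, forall i j,
      mxpow ((pattern_mx U)^T *m pattern_mx U) M i j != 0) ->
  forall V : 'M[R[i]]_d, unitary V ->
    exists s : seq 'M[R[i]]_d,
      (forall A, A \in s ->
         diag_unitary A \/
         exists D : 'M[R[i]]_d, diag_unitary D /\ A = adjmx U *m D *m U) /\
      V = mxprod s.
Proof.
move=> d2 HU hM V HV.
pose i0 : 'I_d := Ordinal (ltnW d2).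
suff : inG U V by case=> s [hs ->]; exists s.
have allW := all_W HU i0 hM.
have [h1 h2] := HV; rewrite adjmxE in h1 h2.
have VN : V \is normalmx.
  apply/normalmxP.
  rewrite -map_trmx -[(map_mx _ V)^T]/(cadj V).
  by rewrite h1 h2.
set P := spectralmx V.
have PU : P \is unitarymx := spectral_unitarymx V.
have eV := orthomx_spectralP VN.
set sp := spectral_diag V in eV.
have hP1 : P *m cadj P = 1%:M by have := unitarymxP PU; rewrite -map_trmx.
have Pinv : invmx P = cadj P by rewrite invmx_unitary // -map_trmx.
have hP2 : cadj P *m P = 1%:M by rewrite -Pinv mulVmx // unitarymx_unit.
rewrite -/P Pinv in eV.
have eD : diag_mx sp = P *m V *m cadj P.
  by rewrite eV !mulmxA hP1 mul1mx -mulmxA hP1 mulmx1.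
have spu : forall k, sp 0 k * (sp 0 k)^* = 1.
  move=> k.
  have : diag_mx sp *m cadj (diag_mx sp) = 1%:M.
    rewrite eD !cadjM cadjK !mulmxA -[P *m V *m cadj P *m P]mulmxA hP2 mulmx1.
    by rewrite -[P *m V *m cadj V]mulmxA h2 mulmx1 hP1.
  by move/matrixP/(_ k k); rewrite mul_diag_mx !mxE !eqxx mulr1n.
have eD2 : diag_mx sp = mxprod [seq Pm (ev R k) (sp 0 k) | k <- enum 'I_d].
  rewrite diag_prod ?enum_uniq //; congr diag_mx; apply/rowP => k.
  by rewrite mxE mem_enum.
rewrite eV eD2 conj_prod //.
apply: inG_mxprod => A /mapP [B /mapP [k _ ->] ->].
rewrite -{2}[P]cadjK Pm_conj ?cadjK //.
have w0 : cadj P *m ev R k != 0.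
  apply/eqP => e; move: (ev_neq0 R k); rewrite -[ev R k]mul1mx -hP1 -mulmxA e mulmx0.
  by rewrite eqxx.
by have [_ ] := allW _ w0; apply; exact: spu.
Qed.
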